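(* Let $G$ be a topological group and let $\mathcal{K}$ be a collection of $G$-spaces that is closed under taking projective limits. Let $M_1, M_2$ be $\mathcal{K}$-universal $G$-spaces. Then $M_1$ and $M_2$ are isomorphic, i.e. there is a $G$-equivariant homeomorphism $M_1 \to M_2$.
   Context: A $G$-space is a nonempty compact Hausdorff space $X$ together with a jointly continuous action $G \times X \to X$ of the (Hausdorff) topological group $G$. An epimorphism of $G$-spaces is a surjective continuous $G$-equivariant map; $Y$ is a factor of $X$ if there is an epimorphism $X \to Y$. An isomorphism is a bijective epimorphism (equivalently a $G$-equivariant homeomorphism). Given a collection $\mathcal{K}$ of $G$-spaces, a $G$-space $M$ is $\mathcal{K}$-universal if $M \in \mathcal{K}$ and every $N \in \mathcal{K}$ is a factor of $M$. $\mathcal{K}$ is closed under taking projective limits means: whenever $\alpha$ is an ordinal, $(X_\gamma)_{\gamma<\alpha}$ are $G$-spaces in $\mathcal{K}$ and $\phi_{\delta,\gamma}: X_\gamma \to X_\delta$ ($\delta \le \gamma < \alpha$) are epimorphisms with $\phi_{\gamma,\gamma}=\mathrm{id}$ and $\phi_{\delta,\epsilon} = \phi_{\delta,\gamma}\circ\phi_{\gamma,\epsilon}$ for $\delta\le\gamma\le\epsilon$, the projective (inverse) limit $\{(x_\gamma)_{\gamma<\alpha} \in \prod_{\gamma<\alpha} X_\gamma : \phi_{\delta,\gamma}(x_\gamma)=x_\delta \text{ for all } \delta\le\gamma\}$, with the product topology and diagonal $G$-action, belongs to $\mathcal{K}$. *)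

(* Defs.v *)
From Stdlib Require Import List.
Import ListNotations.
Set Implicit Arguments.

Section Topology.

Definition is_topology {X : Type} (op : (X -> Prop) -> Prop) : Prop :=
  op (fun _ => True) /\
  (forall U V, op U -> op V -> op (fun x => U x /\ V x)) /\
  (forall F : (X -> Prop) -> Prop, (forall U, F U -> op U) ->
     op (fun x => exists U, F U /\ U x)).

Definition generated {X : Type} (S : (X -> Prop) -> Prop) (W : X -> Prop) : Prop :=
  forall x, W x -> exists l : list (X -> Prop),
    (forall U, In U l -> S U /\ U x) /\
    (forall y, (forall U, In U l -> U y) -> W y).

Definition prod_open {X Y : Type} (oX : (X -> Prop) -> Prop) (oY : (Y -> Prop) -> Prop)
  : (X * Y -> Prop) -> Prop :=
  generated (fun W =>
    (exists U, oX U /\ forall p, W p <-> U (fst p)) \/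
    (exists V, oY V /\ forall p, W p <-> V (snd p))).

Definition initial_open {X J : Type} (Y : J -> Type)
  (oY : forall j, (Y j -> Prop) -> Prop) (f : forall j, X -> Y j)
  : (X -> Prop) -> Prop :=
  generated (fun W => exists j V, oY j V /\ forall x, W x <-> V (f j x)).

Definition continuous {X Y : Type} (oX : (X -> Prop) -> Prop) (oY : (Y -> Prop) -> Prop)
  (f : X -> Y) : Prop :=
  forall V, oY V -> oX (fun x => V (f x)).

Definition hausdorff {X : Type} (op : (X -> Prop) -> Prop) : Prop :=
  forall x y, x <> y -> exists U V, op U /\ op V /\ U x /\ V y /\
    (forall z, ~ (U z /\ V z)).

Definition compact {X : Type} (op : (X -> Prop) -> Prop) : Prop :=
  forall F : (X -> Prop) -> Prop, (forall U, F U -> op U) ->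
    (forall x, exists U, F U /\ U x) ->
    exists l : list (X -> Prop), (forall U, In U l -> F U) /\
      (forall x, exists U, In U l /\ U x).

End Topology.

Definition is_topgroup {G : Type} (mul : G -> G -> G) (inv : G -> G) (one : G)
  (opG : (G -> Prop) -> Prop) : Prop :=
  (forall a b c, mul a (mul b c) = mul (mul a b) c) /\
  (forall a, mul one a = a) /\ (forall a, mul a one = a) /\
  (forall a, mul (inv a) a = one) /\ (forall a, mul a (inv a) = one) /\
  is_topology opG /\ hausdorff opG /\
  continuous (prod_open opG opG) opG (fun p => mul (fst p) (snd p)) /\
  continuous opG opG inv.

Record GData (G : Type) := mkGData {
  carrier : Type;
  gopen : (carrier -> Prop) -> Prop;
  gact : G -> carrier -> carrier }.
Arguments carrier {G}.
Arguments gopen {G}.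
Arguments gact {G}.

Definition is_GSpace {G : Type} (mul : G -> G -> G) (one : G)
  (opG : (G -> Prop) -> Prop) (D : GData G) : Prop :=
  inhabited (carrier D) /\ is_topology (gopen D) /\ compact (gopen D) /\
  hausdorff (gopen D) /\
  (forall x, gact D one x = x) /\
  (forall a b x, gact D (mul a b) x = gact D a (gact D b x)) /\
  continuous (prod_open opG (gopen D)) (gopen D) (fun p => gact D (fst p) (snd p)).

Definition equivariant {G : Type} (D E : GData G) (f : carrier D -> carrier E) : Prop :=
  forall a x, f (gact D a x) = gact E a (f x).

Definition epimorphism {G : Type} (D E : GData G) (f : carrier D -> carrier E) : Prop :=
  continuous (gopen D) (gopen E) f /\ (forall y, exists x, f x = y) /\ equivariant D E f.

Definition isomorphism {G : Type} (D E : GData G) (f : carrier D -> carrier E) : Prop :=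
  epimorphism D E f /\ (forall x y, f x = f y -> x = y).

Definition factor_of {G : Type} (E D : GData G) : Prop :=
  exists f, epimorphism D E f.

(* (I, le) is a well-order; it stands for an ordinal alpha = {gamma | gamma < alpha}. *)
Definition well_order {I : Type} (le : I -> I -> Prop) : Prop :=
  (forall i, le i i) /\ (forall i j, le i j -> le j i -> i = j) /\
  (forall i j k, le i j -> le j k -> le i k) /\ (forall i j, le i j \/ le j i) /\
  (forall P : I -> Prop, (exists i, P i) -> exists m, P m /\ forall j, P j -> le m j).

Section Limit.
Context {G : Type} {I : Type} (le : I -> I -> Prop) (X : I -> GData G)
  (phi : forall d g : I, carrier (X g) -> carrier (X d))
  (Heqv : forall d g, le d g -> equivariant (X g) (X d) (phi d g)).

Definition lim_carrier : Type :=
  { x : forall i, carrier (X i) | forall d g, le d g -> phi d g (x g) = x d }.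

Definition lim_open : (lim_carrier -> Prop) -> Prop :=
  initial_open (fun i => carrier (X i)) (fun i => gopen (X i))
    (fun i (x : lim_carrier) => proj1_sig x i).

Definition lim_act (a : G) (x : lim_carrier) : lim_carrier.
Proof.
  refine (exist _ (fun i => gact (X i) a (proj1_sig x i)) _).
  intros d g h. rewrite (Heqv h). f_equal. exact (proj2_sig x d g h).
Defined.

Definition proj_limit : GData G := mkGData lim_open lim_act.

End Limit.

Definition collection_of_GSpaces {G : Type} (mul : G -> G -> G) (one : G)
  (opG : (G -> Prop) -> Prop) (K : GData G -> Prop) : Prop :=
  forall D, K D -> is_GSpace mul one opG D.

Definition closed_under_proj_limits {G : Type} (K : GData G -> Prop) : Prop :=
  forall (I : Type) (le : I -> I -> Prop) (X : I -> GData G)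
    (phi : forall d g : I, carrier (X g) -> carrier (X d)),
    well_order le ->
    (forall i, K (X i)) ->
    (forall d g, le d g -> epimorphism (X g) (X d) (phi d g)) ->
    (forall d x, phi d d x = x) ->
    (forall d g e, le d g -> le g e -> forall x, phi d e x = phi d g (phi g e x)) ->
    forall Heqv : (forall d g, le d g -> equivariant (X g) (X d) (phi d g)),
    K (proj_limit le X phi Heqv).

Definition universal {G : Type} (K : GData G -> Prop) (M : GData G) : Prop :=
  K M /\ forall N, K N -> factor_of N M.

(* Main.v *)
Require Import Defs.
From Stdlib Require Import List Classical ClassicalEpsilon FunctionalExtensionality PropExtensionality ProofIrrelevance.

Section Tower.
Variable T : Type.
Variable f : (T -> Prop) -> T.
Hypothesis hf : forall S : T -> Prop, (exists x, ~ S x) -> ~ S (f S).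

Definition gS (S : T -> Prop) : T -> Prop := fun x => S x \/ x = f S.
Definition unionF (F : (T -> Prop) -> Prop) : T -> Prop := fun x => exists S, F S /\ S x.
Definition subT (A B : T -> Prop) := forall x, A x -> B x.

Inductive tower : (T -> Prop) -> Prop :=
| tw_succ S : tower S -> tower (gS S)
| tw_union F : (forall S, F S -> tower S) -> tower (unionF F).

Lemma pred_ext (A B : T -> Prop) : subT A B -> subT B A -> A = B.
Proof. intros h1 h2; apply functional_extensionality; intro x;
  apply propositional_extensionality; split; auto. Qed.

Lemma L1 C : tower C -> (forall A, tower A -> subT A C \/ subT C A) ->
  forall A, tower A -> subT A C \/ subT (gS C) A.
Proof.
  intros tC comp A tA. induction tA as [B tB IH | F tF IH].
  - destruct IH as [h|h].
    + destruct (comp (gS B) (tw_succ B tB)) as [h2|h2]; [left; exact h2|].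
      destruct (classic (C (f B))) as [hc|hc].
      * left. intros x [hx|hx]; [auto| subst; auto].
      * assert (e : B = C).
        { apply pred_ext; auto. intros x hx. destruct (h2 x hx) as [?|e]; auto.
          subst; contradiction. }
        subst. right. intros x hx; exact hx.
    + right. intros x hx. left. auto.
  - destruct (classic (exists S, F S /\ ~ subT S C)) as [[S [hS hn]]|hn].
    + right. destruct (IH S hS) as [h|h]; [contradiction|].
      intros x hx. exists S; auto.
    + left. intros x [S [hS hx]]. destruct (classic (subT S C)) as [h|h].
      * auto.
      * exfalso; apply hn; eauto.
Qed.

Lemma all_comp C : tower C -> forall A, tower A -> subT A C \/ subT C A.
Proof.
  intro tC. induction tC as [B tB IH | F tF IH]; intros A tA.
  - destruct (L1 B tB IH A tA) as [h|h].
    + left. intros x hx. left. auto.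
    + right. exact h.
  - destruct (classic (forall S, F S -> subT S A)) as [h|h].
    + right. intros x [S [hS hx]]. exact (h S hS x hx).
    + apply not_all_ex_not in h. destruct h as [S hS].
      apply imply_to_and in hS. destruct hS as [hS hn].
      destruct (IH S hS A tA) as [h|h]; [|contradiction].
      left. intros x hx. exists S; auto.
Qed.

Definition Sx (x : T) : T -> Prop := unionF (fun S => tower S /\ ~ S x).
Lemma Sx_tower x : tower (Sx x).
Proof. apply tw_union. intros S [h _]; exact h. Qed.
Lemma Sx_not x : ~ Sx x x.
Proof. intros [S [[_ h] hx]]; auto. Qed.

Lemma Sx_fix x : f (Sx x) = x.
Proof.
  destruct (classic (gS (Sx x) x)) as [[h|h]|h].
  - exfalso; exact (Sx_not x h).
  - auto.
  - exfalso. assert (hs : subT (gS (Sx x)) (Sx x)).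
    { intros y hy. exists (gS (Sx x)). split; [split|]; auto.
      apply tw_succ, Sx_tower. }
    apply (hf (Sx x)). { exists x. apply Sx_not. }
    apply hs. right; reflexivity.
Qed.

Definition leT x y := subT (Sx x) (Sx y).

Lemma leT_wo : well_order leT.
Proof.
  unfold leT; split; [|split; [|split; [|split]]].
  - intros i x h; exact h.
  - intros i j h1 h2. rewrite <- (Sx_fix i), <- (Sx_fix j).
    f_equal. apply pred_ext; auto.
  - intros i j k h1 h2 x hx; auto.
  - intros i j. destruct (all_comp (Sx j) (Sx_tower j) (Sx i) (Sx_tower i)); auto.
  - intros P [p0 hp0].
    set (Sst := unionF (fun S => tower S /\ forall z, S z -> ~ P z)).
    assert (tS : tower Sst). { apply tw_union. intros S [h _]; exact h. }
    assert (dS : forall z, Sst z -> ~ P z). { intros z [S [[_ h] hz]]; eauto. }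
    assert (Pm : P (f Sst)).
    { destruct (classic (exists z, gS Sst z /\ P z)) as [[z [[hz|hz] pz]]|hn].
      - exfalso; exact (dS z hz pz).
      - subst; exact pz.
      - exfalso. assert (hs : subT (gS Sst) Sst).
        { intros y hy. exists (gS Sst). split; [split|]; auto.
          apply tw_succ, tS. intros z hz pz; apply hn; eauto. }
        apply (hf Sst). { exists p0. intro h; exact (dS p0 h hp0). }
        apply hs. right; reflexivity. }
    exists (f Sst). split; [exact Pm|].
    intros p hp x hx.
    assert (h1 : subT Sst (Sx p)).
    { intros y [S [[tS' dS'] hy]]. exists S. split; [split|]; auto.
      intro hSp. exact (dS' p hSp hp). }
    apply h1.
    destruct (all_comp (gS Sst) (tw_succ _ tS) (Sx (f Sst)) (Sx_tower _)) as [h|h].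
    + destruct (h x hx) as [h'|h']; auto. subst. exfalso; exact (Sx_not _ hx).
    + exfalso. apply (Sx_not (f Sst)). apply h. right; reflexivity.
Qed.
End Tower.

Lemma exists_wo (T : Type) : inhabited T -> exists le : T -> T -> Prop, well_order le.
Proof.
  intro inh.
  set (f := fun S : T -> Prop => epsilon inh (fun x => ~ S x)).
  assert (hf : forall S : T -> Prop, (exists x, ~ S x) -> ~ S (f S)).
  { intros S h. exact (epsilon_spec inh (fun x => ~ S x) h). }
  exists (leT T f). apply leT_wo. exact hf.
Qed.

Lemma cantor (C : Type) (g : (C -> Prop) -> C) : ~ (forall P Q, g P = g Q -> P = Q).
Proof.
  intro inj. set (D := fun c => exists P, g P = c /\ ~ P c).
  destruct (classic (D (g D))) as [h|h].
  - pose proof h as h'. destruct h' as [P [e hP]]. apply inj in e. subst. exact (hP h).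
  - apply h. exists D. split; auto.
Qed.

Section WO.
Context {J : Type} (le : J -> J -> Prop) (wo : well_order le).
Definition ltw x y := le x y /\ x <> y.

Lemma wo_refl x : le x x. Proof. destruct wo as [h _]; auto. Qed.
Lemma wo_antisym x y : le x y -> le y x -> x = y. Proof. destruct wo as [_ [h _]]; auto. Qed.
Lemma wo_trans x y z : le x y -> le y z -> le x z. Proof. destruct wo as [_ [_ [h _]]]; eauto. Qed.
Lemma wo_total x y : le x y \/ le y x. Proof. destruct wo as [_ [_ [_ [h _]]]]; auto. Qed.
Lemma wo_least (P : J -> Prop) : (exists i, P i) -> exists m, P m /\ forall j, P j -> le m j.
Proof. destruct wo as [_ [_ [_ [_ h]]]]; auto. Qed.

Lemma lt_trans x y z : ltw x y -> ltw y z -> ltw x z.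
Proof.
  intros [h1 n1] [h2 n2]. split. eapply wo_trans; eauto.
  intro e; subst. apply n1. apply wo_antisym; auto.
Qed.
Lemma lt_le_trans x y z : ltw x y -> le y z -> ltw x z.
Proof.
  intros [h1 n1] h2. split. eapply wo_trans; eauto.
  intro e; subst. apply n1. apply wo_antisym; auto.
Qed.
Lemma le_lt_trans x y z : le x y -> ltw y z -> ltw x z.
Proof.
  intros h1 [h2 n2]. split. eapply wo_trans; eauto.
  intro e; subst. apply n2. apply wo_antisym; auto.
Qed.
Lemma lt_irrefl x : ~ ltw x x. Proof. intros [_ n]; auto. Qed.
Lemma lt_or_ge x y : ltw x y \/ le y x.
Proof.
  destruct (wo_total x y) as [h|h]; auto.
  destruct (classic (x = y)) as [e|e]. subst; right; apply wo_refl. left; split; auto.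
Qed.
Lemma not_lt_le x y : ~ ltw x y -> le y x.
Proof. intro h. destruct (lt_or_ge x y); tauto. Qed.
Lemma le_not_lt x y : le x y -> ~ ltw y x.
Proof. intros h [h2 n]. apply n. apply wo_antisym; auto. Qed.

Lemma lt_wf : well_founded ltw.
Proof.
  intro x. apply NNPP. intro hn.
  destruct (wo_least (fun y => ~ Acc ltw y) (ex_intro _ x hn)) as [m [hm hmin]].
  apply hm. constructor. intros y hy. apply NNPP. intro hy'.
  apply (le_not_lt _ _ (hmin y hy') hy).
Qed.

Lemma sub_wo (P : J -> Prop) : well_order (fun d g : {i | P i} => le (proj1_sig d) (proj1_sig g)).
Proof.
  split; [|split; [|split; [|split]]].
  - intros; apply wo_refl.
  - intros [i pi] [j pj] h1 h2. simpl in *. assert (i = j) by (apply wo_antisym; auto).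
    subst. f_equal. apply proof_irrelevance.
  - intros; eapply wo_trans; eauto.
  - intros; apply wo_total.
  - intros Q [i hi].
    destruct (wo_least (fun j => exists pj : P j, Q (exist _ j pj))) as [m [[pm hm] hmin]].
    { destruct i as [i pi]. exists i, pi. exact hi. }
    exists (exist _ m pm). split; auto.
    intros [j pj] hj. apply hmin. exists pj; exact hj.
Qed.
End WO.

Section Lex.
Context {I : Type} (leI : I -> I -> Prop) (woI : well_order leI).
Definition leJ (x y : I * bool) : Prop :=
  ltw leI (fst x) (fst y) \/ (fst x = fst y /\ (snd x = false \/ snd y = true)).

Lemma lex_wo : well_order leJ.
Proof.
  unfold leJ; split; [|split; [|split; [|split]]].
  - intros [a b]; simpl. right; split; auto. destruct b; auto.
  - intros [a b] [c d]; simpl. intros [h1|[e1 h1]] [h2|[e2 h2]].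
    + exfalso. apply (lt_irrefl leI a). eapply lt_trans; eauto.
    + subst. exfalso; eapply lt_irrefl; eauto.
    + subst. exfalso; eapply lt_irrefl; eauto.
    + subst. f_equal. destruct b, d; intuition congruence.
  - intros [a b] [c d] [e f]; simpl. intros [h1|[e1 h1]] [h2|[e2 h2]].
    + left. eapply lt_trans; eauto.
    + subst. left; auto.
    + subst. left; auto.
    + subst. right. split; auto. destruct b, d, f; intuition congruence.
  - intros [a b] [c d]; simpl.
    destruct (lt_or_ge leI woI a c) as [h|h]; auto.
    destruct (classic (a = c)) as [e|e].
    + subst. destruct b, d; auto.
    + right. left. split; auto.
  - intros P [[i0 b0] h0].
    destruct (wo_least leI woI (fun a => exists b, P (a, b))) as [m [[bm hm] hmin]].
    { exists i0, b0; exact h0. }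
    destruct (classic (P (m, false))) as [hf|hf].
    + exists (m, false). split; auto. intros [a b] hab. simpl.
      destruct (classic (m = a)) as [e|e]. subst. right; auto.
      left. split; auto. apply hmin. eauto.
    + destruct bm; [|contradiction].
      exists (m, true). split; auto. intros [a b] hab. simpl.
      destruct (classic (m = a)) as [e|e].
      * subst. right. split; auto. destruct b; auto.
      * left. split; auto. apply hmin. eauto.
Qed.

Lemma lex_lt1 a : ltw leJ (a, false) (a, true).
Proof. split. right; simpl; auto. congruence. Qed.
Lemma lex_lt2 a c : ltw leI a c -> leJ (a, true) (c, false).
Proof. intro h. left. exact h. Qed.
End Lex.

Section Main.
Context (G : Type) (mul : G -> G -> G) (one : G) (opG : (G -> Prop) -> Prop)
  (K : GData G -> Prop) (HK : collection_of_GSpaces mul one opG K)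
  (Hlim : closed_under_proj_limits K)
  (M1 M2 : GData G) (H1 : universal K M1) (H2 : universal K M2).
Context {I : Type} (leI : I -> I -> Prop) (woI : well_order leI).

Definition J : Type := (I * bool)%type.
Definition le : J -> J -> Prop := leJ leI.
Lemma wo : well_order le. Proof. apply lex_wo; auto. Qed.
Notation lt := (ltw le).

Definition Xs (j : J) : GData G := if snd j then M1 else M2.
Definition Xc (j : J) : Type := carrier (Xs j).

Lemma univX j : universal K (Xs j). Proof. unfold Xs; destruct (snd j); auto. Qed.
Lemma inhX j : inhabited (Xc j).
Proof. destruct (univX j) as [h _]. destruct (HK _ h) as [i _]. exact i. Qed.
Definition dflt (l : J) : Xc l := epsilon (inhX l) (fun _ => True).

Definition RT (j : J) := forall i, lt i j -> Xc i -> forall l, Xc l.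

Definition GoodR (j : J) (rec : RT j) (h : Xc j -> forall l, Xc l) : Prop :=
  (forall y d g (pg : lt g j), lt d g -> rec g pg (h y g) d = h y d) /\
  (forall t : forall l, Xc l,
     (forall d g (pg : lt g j), lt d g -> rec g pg (t g) d = t d) ->
     exists y, forall d, lt d j -> h y d = t d) /\
  (forall a y d, lt d j -> h (gact (Xs j) a y) d = gact (Xs d) a (h y d)) /\
  (forall d, lt d j -> continuous (gopen (Xs j)) (gopen (Xs d)) (fun y => h y d)).

Lemma inhH j : inhabited (Xc j -> forall l, Xc l).
Proof. constructor. exact (fun _ => dflt). Qed.

Definition Gstep (j : J) (rec : RT j) : Xc j -> forall l, Xc l :=
  epsilon (inhH j) (GoodR j rec).

Definition E : forall j, Xc j -> forall l, Xc l :=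
  Fix (lt_wf le wo) (fun j => Xc j -> forall l, Xc l) Gstep.

Lemma E_eq j : E j = Gstep j (fun i _ => E i).
Proof.
  unfold E. refine (Fix_eq (lt_wf le wo) (fun j => Xc j -> forall l, Xc l) Gstep _ j).
  intros x f g h.
  assert (f = g) as ->; [|reflexivity].
  apply functional_extensionality_dep; intro y.
  apply functional_extensionality_dep; intro p. apply h.
Qed.

Definition Good j := GoodR j (fun i _ => E i) (E j).

Definition phi (d g : J) (y : Xc g) : Xc d :=
  match excluded_middle_informative (d = g) with
  | left e => eq_rect_r Xc y e
  | right _ => E g y d
  end.

Lemma phi_id d y : phi d d y = y.
Proof.
  unfold phi. destruct (excluded_middle_informative (d = d)) as [e|n].
  - rewrite (proof_irrelevance _ e eq_refl). reflexivity.
  - exfalso; auto.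
Qed.
Lemma phi_ne d g y : d <> g -> phi d g y = E g y d.
Proof.
  intro n. unfold phi. destruct (excluded_middle_informative (d = g)); [contradiction|auto].
Qed.

Lemma thread (B : J -> Prop) (Bdown : forall i k, lt i k -> B k -> B i)
  (HG : forall k, B k -> Good k) d (x : Xc d) (Bd : B d) :
  exists t : forall l, Xc l, (forall l m, lt l m -> B m -> E m (t m) l = t l) /\ t d = x.
Proof.
  set (Tstep := fun (k : J) (rec : forall l, lt l k -> Xc l) =>
    match excluded_middle_informative (le k d) with
    | left _ => phi k d x
    | right _ => epsilon (inhX k) (fun y => forall l (p : lt l k), E k y l = rec l p)
    end).
  set (t := Fix (lt_wf le wo) Xc Tstep).
  assert (t_eq : forall k, t k = Tstep k (fun l _ => t l)).
  { intro k. unfold t. refine (Fix_eq (lt_wf le wo) Xc Tstep _ k). intros k0 f g h.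
    assert (f = g) as ->; [|reflexivity].
    apply functional_extensionality_dep; intro y.
    apply functional_extensionality_dep; intro p. apply h. }
  assert (claim : forall k, B k -> forall l, lt l k -> E k (t k) l = t l).
  { intro k. induction k as [k IH] using (well_founded_ind (lt_wf le wo)).
    intros Bk l hlk. rewrite (t_eq k). unfold Tstep.
    destruct (excluded_middle_informative (le k d)) as [hkd|hkd].
    - destruct (classic (k = d)) as [e|e].
      + subst k. rewrite phi_id. rewrite (t_eq l). unfold Tstep.
        destruct (excluded_middle_informative (le l d)) as [_|h].
        * rewrite phi_ne; auto. intro e; subst. eapply lt_irrefl; eauto.
        * exfalso. apply h. destruct hlk; auto.
      + assert (hkd' : lt k d) by (split; auto).
        rewrite phi_ne by auto. rewrite (t_eq l). unfold Tstep.
        destruct (excluded_middle_informative (le l d)) as [_|h].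
        * rewrite phi_ne.
          -- destruct (HG d Bd) as [h1 _]. apply (h1 x l k hkd' hlk).
          -- intro e'; rewrite e' in hlk. apply (lt_irrefl le d). eapply lt_trans; [exact wo|exact hlk|exact hkd'].
        * exfalso. apply h. destruct (lt_trans le wo _ _ _ hlk hkd'); auto.
    - assert (ex : exists y, forall l (p : lt l k), E k y l = t l).
      { destruct (HG k Bk) as [_ [h2 _]].
        destruct (h2 t) as [y hy].
        { intros d' g pg hdg. apply IH; auto. eapply Bdown; eauto. }
        exists y. intros l0 p. apply hy; auto. }
      exact (epsilon_spec (inhX k) (fun y => forall l (p : lt l k), E k y l = t l) ex l hlk). }
  exists t. split.
  - intros l m hlm Bm. apply claim; auto.
  - rewrite t_eq. unfold Tstep. destruct (excluded_middle_informative (le d d)) as [_|h].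
    + apply phi_id.
    + exfalso; apply h; apply (wo_refl le wo).
Qed.

Lemma lt_ne d g : lt d g -> d <> g.
Proof. intros [_ n]; exact n. Qed.

Lemma epi_phi d g : le d g -> (forall k, le k g -> Good k) ->
  epimorphism (Xs g) (Xs d) (phi d g).
Proof.
  intros hle HG. destruct (classic (d = g)) as [e|n].
  - subst d. split; [|split].
    + intros V hV. assert (ee : (fun x => V (phi g g x)) = V).
      { apply functional_extensionality; intro x; rewrite phi_id; reflexivity. }
      unfold Xc in ee. rewrite ee; exact hV.
    + intro y; exists y; apply phi_id.
    + intros a x; rewrite !phi_id; reflexivity.
  - assert (hlt : lt d g) by (split; auto).
    assert (ee : phi d g = fun y => E g y d).
    { apply functional_extensionality; intro y; apply phi_ne; auto. }
    rewrite ee. destruct (HG g (wo_refl le wo g)) as [h1 [h2 [h3 h4]]].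
    split; [|split].
    + apply h4; auto.
    + intro x. destruct (thread (fun k => lt k g)) with (d := d) (x := x) as [t [ht td]].
      * intros i k hik hkg. eapply lt_trans; eauto. exact wo.
      * intros k hk. apply HG. destruct hk; auto.
      * exact hlt.
      * destruct (h2 t) as [y hy].
        { intros d' g' pg hdg. apply ht; auto. }
        exists y. rewrite hy; auto.
    + intros a y. apply h3; auto.
Qed.

Lemma phi_comp d g e x : le d g -> le g e -> Good e -> phi d e x = phi d g (phi g e x).
Proof.
  intros h1 h2 He.
  destruct (classic (d = g)) as [e1|n1]. { subst. rewrite phi_id. reflexivity. }
  destruct (classic (g = e)) as [e2|n2]. { subst. rewrite phi_id. reflexivity. }
  assert (l1 : lt d g) by (split; auto). assert (l2 : lt g e) by (split; auto).
  assert (l3 : lt d e) by (eapply lt_trans; eauto; exact wo).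
  rewrite !phi_ne; auto. 2: apply lt_ne; auto.
  destruct He as [h _]. symmetry. apply (h x d g l2 l1).
Qed.

Lemma KX j : K (Xs j). Proof. destruct (univX j); auto. Qed.

Lemma initial_proj {J0 : Type} (Y : J0 -> Type) (oY : forall j, (Y j -> Prop) -> Prop)
  {X0 : Type} (f : forall j, X0 -> Y j) j V : oY j V -> initial_open Y oY f (fun x => V (f j x)).
Proof.
  intros hV x hx. exists ((fun x => V (f j x)) :: nil). split.
  - intros U [hU|[]]. subst U. split; auto. exists j, V. split; auto. tauto.
  - intros y hy. apply (hy _ (or_introl eq_refl)).
Qed.

Lemma good_all : forall j, Good j.
Proof.
  intro j. induction j as [j IH] using (well_founded_ind (lt_wf le wo)).
  assert (ex : exists h, GoodR j (fun i _ => E i) h).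
  { set (Sj := {i : J | lt i j}).
    set (leS := fun d g : Sj => le (proj1_sig d) (proj1_sig g)).
    set (Xsub := fun s : Sj => Xs (proj1_sig s)).
    set (phis := fun (d g : Sj) (y : carrier (Xsub g)) => phi (proj1_sig d) (proj1_sig g) y : carrier (Xsub d)).
    assert (Hepi : forall d g, leS d g -> epimorphism (Xsub g) (Xsub d) (phis d g)).
    { intros [d pd] [g pg] hdg. apply epi_phi; auto. intros k hk. apply IH.
      eapply le_lt_trans; eauto. exact wo. }
    assert (Heqv : forall d g, leS d g -> equivariant (Xsub g) (Xsub d) (phis d g)).
    { intros d g h. exact (proj2 (proj2 (Hepi d g h))). }
    assert (KL : K (proj_limit leS Xsub phis Heqv)).
    { apply Hlim.
      - apply sub_wo; exact wo.
      - intro i; apply KX.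
      - exact Hepi.
      - intros d x; apply phi_id.
      - intros [d pd] [g pg] [e pe] h1 h2 x. apply phi_comp; auto. }
    destruct (univX j) as [_ hu]. destruct (hu _ KL) as [f [fc [fs fe]]].
    set (h := fun y l => match excluded_middle_informative (lt l j) with
                         | left p => proj1_sig (f y) (exist _ l p)
                         | right _ => dflt l end).
    assert (h_eq : forall y l (p : lt l j), h y l = proj1_sig (f y) (exist _ l p)).
    { intros y l p. unfold h. destruct (excluded_middle_informative (lt l j)) as [p'|n].
      - rewrite (proof_irrelevance _ p' p). reflexivity.
      - contradiction. }
    exists h. split; [|split; [|split]].
    - intros y d g pg hdg. assert (pd : lt d j) by (eapply lt_trans; eauto; exact wo).
      rewrite (h_eq y g pg), (h_eq y d pd).
      pose proof (proj2_sig (f y) (exist _ d pd) (exist _ g pg)) as hc.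
      simpl in hc. unfold phis in hc. simpl in hc. rewrite phi_ne in hc by (apply lt_ne; auto).
      apply hc. destruct hdg; auto.
    - intros t ht.
      assert (zc : forall d g : Sj, leS d g -> phis d g (t (proj1_sig g)) = t (proj1_sig d)).
      { intros [d pd] [g pg] hdg. unfold phis; simpl in *.
        destruct (classic (d = g)) as [e|n].
        - subst. apply phi_id.
        - rewrite phi_ne by auto. apply ht; auto. split; auto. }
      destruct (fs (exist _ (fun s : Sj => t (proj1_sig s)) zc)) as [y hy].
      exists y. intros d pd. rewrite (h_eq y d pd). rewrite hy. reflexivity.
    - intros a y d pd. rewrite !h_eq with (p := pd). rewrite fe. reflexivity.
    - intros d pd V hV.
      assert (ee : (fun y => V (h y d)) = (fun y => (fun z : lim_carrier leS Xsub phis => V (proj1_sig z (exist (fun i => lt i j) d pd))) (f y))).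
      { apply functional_extensionality; intro y. rewrite (h_eq y d pd). reflexivity. }
      rewrite ee.
      exact (fc (fun z : lim_carrier leS Xsub phis => V (proj1_sig z (exist (fun i => lt i j) d pd)))
        (initial_proj (fun i => carrier (Xsub i)) (fun i => gopen (Xsub i))
               (fun i (x : lim_carrier leS Xsub phis) => proj1_sig x i) (exist _ d pd) V hV)). }
  unfold Good. rewrite (E_eq j). unfold Gstep.
  exact (epsilon_spec (inhH j) _ ex).
Qed.

Lemma final : (exists f : carrier M1 -> carrier M2, isomorphism M1 M2 f) \/
  exists p : I -> carrier M1 * carrier M1, forall a b, p a = p b -> a = b.
Proof.
  assert (Hepi : forall d g, le d g -> epimorphism (Xs g) (Xs d) (phi d g)).
  { intros d g h. apply epi_phi; auto. intros; apply good_all. }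
  assert (Heqv : forall d g, le d g -> equivariant (Xs g) (Xs d) (phi d g)).
  { intros d g h. exact (proj2 (proj2 (Hepi d g h))). }
  assert (KL : K (proj_limit le Xs phi Heqv)).
  { apply Hlim.
    - exact wo.
    - exact KX.
    - exact Hepi.
    - exact phi_id.
    - intros d g e h1 h2 x. apply phi_comp; auto. apply good_all. }
  pose proof H1 as [KM1 hu]. destruct (hu _ KL) as [e [ec [es ee]]].
  assert (pi_coh : forall (z : lim_carrier le Xs phi) d g, lt d g -> E g (proj1_sig z g) d = proj1_sig z d).
  { intros z d g hdg. pose proof (proj2_sig z d g (proj1 hdg)) as hc. simpl in hc.
    rewrite phi_ne in hc by (apply lt_ne; auto). exact hc. }
  assert (pi_surj : forall j (x : Xc j), exists z : lim_carrier le Xs phi, proj1_sig z j = x).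
  { intros j x. destruct (thread (fun _ => True)) with (d := j) (x := x) as [t [ht tj]]; auto.
    { intros; apply good_all. }
    assert (zc : forall d g, le d g -> phi d g (t g) = t d).
    { intros d g hdg. destruct (classic (d = g)) as [E0|n].
      - subst; apply phi_id.
      - rewrite phi_ne by auto. apply ht; auto. split; auto. }
    exists (exist _ t zc). exact tj. }
  set (R := fun (dl : I) (b : bool) (a1 a2 : carrier M1) =>
          proj1_sig (e a1) (dl, b) = proj1_sig (e a2) (dl, b)).
  destruct (classic (exists dl, forall a1 a2, R dl false a1 a2 -> R dl true a1 a2)) as [[dl hdl]|hn].
  - left. pose proof (lex_lt1 leI dl) as hlt.
    destruct (good_all (dl, true)) as [_ [_ [g3 g4]]].
    exists (fun y : carrier M1 => E (dl, true) y (dl, false)).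
    split; [split; [|split]|].
    + exact (g4 (dl, false) hlt).
    + intro w. destruct (pi_surj (dl, false) w) as [z hz].
      exists (proj1_sig z (dl, true)). rewrite pi_coh; auto.
    + intros a y. exact (g3 a y (dl, false) hlt).
    + intros u v huv.
      destruct (pi_surj (dl, true) u) as [zu hzu]. destruct (es zu) as [a1 ha1].
      destruct (pi_surj (dl, true) v) as [zv hzv]. destruct (es zv) as [a2 ha2].
      subst zu zv. rewrite <- hzu, <- hzv in huv |- *.
      rewrite !pi_coh in huv by auto. apply hdl. exact huv.
  - right.
    assert (hp : forall dl, exists pr : carrier M1 * carrier M1,
               R dl false (fst pr) (snd pr) /\ ~ R dl true (fst pr) (snd pr)).
    { intro dl. apply NNPP. intro h. apply hn. exists dl. intros a1 a2 h1.
      apply NNPP. intro h2. apply h. exists (a1, a2). simpl. auto. }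
    assert (inhC : inhabited (carrier M1 * carrier M1)).
    { destruct (HK _ KM1) as [[a] _]. exact (inhabits (a, a)). }
    set (p := fun dl => epsilon inhC (fun pr => R dl false (fst pr) (snd pr) /\ ~ R dl true (fst pr) (snd pr))).
    assert (hps : forall dl, R dl false (fst (p dl)) (snd (p dl)) /\ ~ R dl true (fst (p dl)) (snd (p dl))).
    { intro dl. exact (epsilon_spec inhC _ (hp dl)). }
    exists p.
    assert (key : forall a b, ltw leI a b -> p a <> p b).
    { intros a b hab he. destruct (hps a) as [_ na]. destruct (hps b) as [rb _].
      apply na. rewrite he. unfold R in *.
      assert (hl : lt (a, true) (b, false)).
      { split. apply lex_lt2; auto. congruence. }
      rewrite <- !(pi_coh _ _ _ hl). rewrite rb. reflexivity. }
    intros a b he. destruct (lt_or_ge leI woI a b) as [h|h].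
    + exfalso; exact (key a b h he).
    + destruct (classic (b = a)) as [e0|n]; auto.
      exfalso. apply (key b a). split; auto. auto.
Qed.
End Main.

Theorem mainTheorem1 (G : Type) (mul : G -> G -> G) (inv : G -> G) (one : G)
  (opG : (G -> Prop) -> Prop) (HG : is_topgroup mul inv one opG)
  (K : GData G -> Prop) (HK : collection_of_GSpaces mul one opG K)
  (Hlim : closed_under_proj_limits K)
  (M1 M2 : GData G) (H1 : universal K M1) (H2 : universal K M2) :
  exists f : carrier M1 -> carrier M2, isomorphism M1 M2 f.
Proof.
  destruct (exists_wo (carrier M1 * carrier M1 -> Prop) (inhabits (fun _ => True))) as [leI woI].
  destruct (@final G mul one opG K HK Hlim M1 M2 H1 H2 _ leI woI) as [h|[p hp]]; auto.
  exfalso. exact (cantor _ p hp).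
Qed.
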